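(* Let $G=(V,E)$ be a finite directed acyclic graph, $G'=(V,E')$ its minimum equivalent graph, $S$ a set of streams, and $f:V\to S$ a stream assignment. A synchronization plan $\Lambda\subseteq E$ is safe for $f$ on $G$ if and only if $\Lambda$ is safe for $f$ on $G'$.
   Context: A path from $u$ to $v$ in a directed graph is a nonempty sequence of edges $(u,w_1),\dots,(w_k,v)$ of that graph. The minimum equivalent graph (MEG) of a finite DAG $G=(V,E)$ is the subgraph $G'=(V,E')$, $E'\subseteq E$, with the same vertex set and the smallest number of edges among subgraphs having the same reachability relation as $G$. A stream assignment is any function $f:V\to S$. A synchronization plan is a set $\Lambda$ of edges. For a directed graph $H=(V,E_H)$ and a stream assignment $f$, a synchronization plan $\Lambda$ is safe for $f$ on $H$ if for every edge $(u,v)\in E_H$, either $f(u)=f(v)$, or there exists a path $P\subseteq E_H$ from $u$ to $v$ in $H$ with $P\cap\Lambda\neq\emptyset$. *)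

(* Defs.v *)
From mathcomp Require Import all_boot.
Set Implicit Arguments. Unset Strict Implicit. Unset Printing Implicit Defensive.

(* A path from u to v in E: a nonempty sequence of edges
   (u,w_1),(w_1,w_2),...,(w_k,v) of E, encoded by the list of vertices
   p = [:: w_1; ...; w_k; v] visited after u. *)
Definition is_path (V : finType) (E : {set V * V}) (u v : V) (p : seq V) : bool :=
  [&& p != [::], path (fun a b => (a, b) \in E) u p & last u p == v].

Definition path_edges (V : Type) (u : V) (p : seq V) : seq (V * V) :=
  zip (u :: p) p.

Definition reach (V : finType) (E : {set V * V}) (u v : V) : Prop :=
  exists p, is_path E u v p.

Definition acyclic (V : finType) (E : {set V * V}) : Prop :=
  forall u, ~ reach E u u.

Definition same_reach (V : finType) (E1 E2 : {set V * V}) : Prop :=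
  forall u v, reach E1 u v <-> reach E2 u v.

Definition is_MEG (V : finType) (E E' : {set V * V}) : Prop :=
  [/\ E' \subset E, same_reach E' E &
      forall E'' : {set V * V}, E'' \subset E -> same_reach E'' E -> #|E'| <= #|E''| ].

Definition safe (V : finType) (S : Type) (EH : {set V * V}) (f : V -> S)
    (Lambda : {set V * V}) : Prop :=
  forall u v, (u, v) \in EH ->
    f u = f v \/ exists p, is_path EH u v p /\ has (fun e => e \in Lambda) (path_edges u p).

(* Main.v *)
Require Import Defs.
From mathcomp Require Import all_boot.

Section Aux.
Local Set Implicit Arguments.
Local Unset Strict Implicit.
Variable V : finType.
Definition er (E : {set V * V}) : rel V := fun a b => (a, b) \in E.

Lemma conn_reach (E : {set V * V}) x y :
  connect (er E) x y <-> x = y \/ reach E x y.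
Proof.
split.
- move=> /connectP [p Hp ->]; case: p Hp => [|a p] Hp; first by left.
  right; exists (a :: p); rewrite /is_path Hp eqxx; done.
- case=> [->|[p /and3P [_ Hp /eqP <-]]]; first exact: connect0.
  by apply/connectP; exists p.
Qed.

Lemma reach_conn (E : {set V * V}) x y :
  reach E x y <-> exists2 w, (x, w) \in E & connect (er E) w y.
Proof.
split.
- case=> [[|w p]]; first by case/and3P.
  case/and3P=> _ /= /andP [Hxw Hp] /eqP <-.
  by exists w => //; apply/connectP; exists p.
- case=> w Hxw /connectP [p Hp ->]; exists (w :: p).
  by apply/and3P; split => //=; apply/andP; split.
Qed.

Lemma reach_trans_conn (E : {set V * V}) x y z :
  reach E x y -> connect (er E) y z -> reach E x z.
Proof.
move=> /reach_conn [w Hw Hc] Hc'; apply/reach_conn; exists w => //.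
exact: connect_trans Hc Hc'.
Qed.

Lemma conn_trans_reach (E : {set V * V}) x y z :
  connect (er E) x y -> reach E y z -> reach E x z.
Proof.
move=> /connectP [p Hp ->] [q /and3P [Hq Hq2 Hq3]].
exists (p ++ q); apply/and3P; split.
- by case: (p) Hq => //; case: q Hq2 Hq3.
- by rewrite cat_path; apply/andP; split.
- by rewrite last_cat.
Qed.

Lemma reach_sub (E1 E2 : {set V * V}) x y :
  E1 \subset E2 -> reach E1 x y -> reach E2 x y.
Proof.
move=> /subsetP sub [p /and3P [H1 H2 H3]]; exists p; rewrite /is_path H1 H3 andbT.
by apply: sub_path H2 => a b /sub.
Qed.

Lemma conn_same (E1 E2 : {set V * V}) x y :
  same_reach E1 E2 -> connect (er E1) x y -> connect (er E2) x y.
Proof.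
move=> sr /conn_reach [->|H]; first exact: connect0.
by apply/conn_reach; right; apply/sr.
Qed.

Lemma path_edges_cat (u : V) p q :
  path_edges u (p ++ q) = path_edges u p ++ path_edges (last u p) q.
Proof. by elim: p u => [|a p IH] u //=; rewrite /path_edges /= -IH. Qed.


Lemma edge_reach (E : {set V * V}) x y : (x, y) \in E -> reach E x y.
Proof. by move=> H; apply/reach_conn; exists y => //; apply: connect0. Qed.

Lemma conn_neq_reach (E : {set V * V}) x y :
  connect (er E) x y -> x != y -> reach E x y.
Proof. by move=> /conn_reach [->|//]; rewrite eqxx. Qed.

Lemma key (E E' : {set V * V}) u v w :
  acyclic E -> is_MEG E E' -> (u, v) \in E' -> (u, w) \in E ->
  connect (er E) w v -> w = v.
Proof.
move=> acyc [sub sr min] Huv Huw Hwv.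
apply/eqP; apply/negPn/negP => Hne.
have subE : {subset E' <= E} by apply/subsetP.
set E2 := E' :\ (u, v).
have avoid : forall p x, path (er E') x p ->
    ~ (connect (er E) x u /\ connect (er E) v (last x p)) ->
    connect (er E2) x (last x p).
  elim=> [|y p IH] x /=; first by move=> _ _ /=; apply: connect0.
  move=> /andP [Hxy Hp] Hn.
  have [exy|nxy] := eqVneq (x, y) (u, v).
    case: exy => ex ey; subst x y; exfalso; apply: Hn; split; first exact: connect0.
    have H := @conn_same E' E v (last v p) sr. apply: H. by apply/connectP; exists p.
  apply: (connect_trans (y := y)).
    by apply: connect1; rewrite /er /E2 in_setD1 nxy.
  apply: IH => // [[Hyu Hvl]]; apply: Hn; split => //.
  apply: connect_trans Hyu; apply: connect1; exact: subE.
have toE' : forall a b, connect (er E) a b -> exists2 p, path (er E') a p & b = last a p.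
  move=> a b H; apply/connectP; exact: (@conn_same E E' a b (fun x y => iff_sym (sr x y)) H).
have cuw : connect (er E2) u w.
  have [p Hp Hw] := toE' u w (connect1 Huw).
  rewrite Hw; apply: avoid => // [[_ Hvw]]; rewrite -Hw in Hvw.
  have Hr : reach E v w by apply: conn_neq_reach; rewrite // eq_sym.
  exact: (acyc v (reach_trans_conn Hr Hwv)).
have cwv : connect (er E2) w v.
  have [p Hp Hv] := toE' w v Hwv.
  rewrite Hv; apply: avoid => // [[Hwu _]].
  exact: (acyc u (reach_trans_conn (edge_reach Huw) Hwu)).
have ruv : reach E2 u v.
  apply: conn_neq_reach; first exact: connect_trans cuw cwv.
  apply/eqP => euv; subst v; exact: (acyc u (edge_reach (subE _ Huv))).
have cE2 : forall a b, connect (er E') a b -> connect (er E2) a b.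
  apply: connect_sub => a b Hab.
  have [[-> ->]|ne] := eqVneq (a, b) (u, v).
    by apply/conn_reach; right.
  by apply: connect1; rewrite /er /E2 in_setD1 ne.
have subE2 : E2 \subset E by apply: subset_trans sub; apply: subsetDl.
have sr2 : same_reach E2 E.
  move=> x y; split; first exact: reach_sub.
  move/sr/reach_conn => [z Hxz Hzy].
  have [[ex ez]|ne] := eqVneq (x, z) (u, v).
    by subst x z; apply: reach_trans_conn ruv (cE2 _ _ Hzy).
  apply/reach_conn; exists z; last exact: cE2.
  by rewrite /E2 in_setD1 ne.
have := min E2 subE2 sr2.
by rewrite (cardsD1 (u, v) E') Huv add1n ltnn.
Qed.

End Aux.

Lemma catp (V : finType) (E L : {set V * V}) x y q1 r :
  is_path E x y q1 -> path (er E) y r -> has (fun e => e \in L) (path_edges x q1) ->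
  is_path E x (last y r) (q1 ++ r) /\ has (fun e => e \in L) (path_edges x (q1 ++ r)).
Proof.
move=> /and3P [Hn Hp /eqP Hl] Hr Hh; split.
  apply/and3P; split.
  - by case: q1 Hn {Hp Hl Hh}.
  - by rewrite cat_path Hp /= Hl.
  - by rewrite last_cat Hl.
by rewrite path_edges_cat has_cat Hh.
Qed.

Lemma path_sub (V : finType) (E1 E2 : {set V * V}) x p :
  E1 \subset E2 -> path (er E1) x p -> path (er E2) x p.
Proof. by move=> /subsetP sub; apply: sub_path => a b /sub. Qed.

Theorem lemma2 (V : finType) (E E' : {set V * V}) (S : Type) (f : V -> S)
    (Lambda : {set V * V}) :
  acyclic E -> is_MEG E E' -> Lambda \subset E ->
  (safe E f Lambda <-> safe E' f Lambda).
Proof.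
move=> acyc meg _; have [sub sr _] := meg.
have subE : {subset E' <= E} by apply/subsetP.
split.
- move=> sE u v Huv'; have Huv := subE _ Huv'.
  case: (sE u v Huv) => [eq|[p [Hp Hhas]]]; first by left.
  right; case: p Hp Hhas => [|w p]; first by case/and3P.
  case/and3P => _ /= /andP [Huw Hp] /eqP Hl Hhas.
  have Hwv : connect (er E) w v by apply/connectP; exists p.
  have ewv := key acyc meg Huv' Huw Hwv; subst w.
  case: p Hp Hl Hhas => [|a p] Hp Hl Hhas.
    by exists [:: v]; split => //; apply/and3P; split => //=; rewrite Huv'.
  exfalso; apply: (acyc v); exists (a :: p).
  by apply/and3P; split => //; apply/eqP.
- move=> sE'.
  have gen : forall p x, path (er E') x p -> f x = f (last x p) \/
      exists q, is_path E x (last x p) q /\ has (fun e => e \in Lambda) (path_edges x q).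
    elim=> [|y p IH] x /=; first by left.
    move=> /andP [Hxy Hp].
    case: (sE' x y Hxy) => [fxy|[q1 [Hq1 Hh1]]];
      case: (IH y Hp) => [fy|[q2 [Hq2 Hh2]]].
    + by left; rewrite fxy.
    + right; exists (y :: q2); split.
        case/and3P: Hq2 => _ Hq2 Hl2; apply/and3P; split => //=.
        by rewrite Hq2 andbT; apply: subE.
      by rewrite /path_edges /= -/(path_edges y q2) Hh2 orbT.
    + right; have Hq1E : is_path E x y q1.
        by case/and3P: Hq1 => a b c; apply/and3P; split => //; exact: (@path_sub V E' E x q1 sub b).
      have := @catp V E Lambda x y q1 p Hq1E (@path_sub V E' E y p sub Hp) Hh1; case=> A B; by exists (q1 ++ p).
    + right; have Hq1E : is_path E x y q1.
        by case/and3P: Hq1 => a b c; apply/and3P; split => //; exact: (@path_sub V E' E x q1 sub b).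
      case/and3P: Hq2 => _ Hq2 /eqP Hl2.
      have := @catp V E Lambda x y q1 q2 Hq1E Hq2 Hh1; rewrite Hl2; case=> A B; by exists (q1 ++ q2).
  move=> u v Huv.
  have /sr [p /and3P [_ Hp /eqP Hl]] : reach E u v by apply: edge_reach.
  by rewrite -Hl; apply: gen.
Qed.
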